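(* Let $A\subset\mathbb R$ be an open interval of length strictly larger than $2$ and let $\psi:A\to\mathbb C$ be a regular $\mathbb C$-supershift on $A$. Then $a\in A\mapsto a\,\psi(a)$ is a regular $\mathbb C$-supershift on $A$; consequently, for every polynomial $p$ with complex coefficients, $a\in A\mapsto p(a)\,\psi(a)$ is a regular $\mathbb C$-supershift on $A$.
   Context: For an open interval $A\subset\mathbb R$ of length $R>2$ (possibly infinite), set $\mathbb A=\{(a,a')\in\mathbb R\times A:\ a'+[-1,1]\subset A,\ a+a'\in A\}$. For a sequence $\boldsymbol\epsilon=(\epsilon_N)_{N\ge1}$ with $\epsilon_N\in[0,1)$ and $\epsilon_N\to0$, put $h^{\boldsymbol\epsilon}_{N,\nu}=1-2\,\frac{\nu+\epsilon_N(N-\nu)}{N}$ for $0\le\nu\le N$. For a continuous $\psi:A\to\mathbb C$ and $(a,a')\in\mathbb A$ set $$S_N^{\boldsymbol\epsilon}[\psi](a,a')=\sum_{\nu=0}^N\binom N\nu\Big(\frac{1+a}2\Big)^{N-\nu}\Big(\frac{1-a}2\Big)^{\nu}\psi\big(a'+h^{\boldsymbol\epsilon}_{N,\nu}\big).$$ A continuous $\psi:A\to\mathbb C$ is called a regular $\mathbb C$-supershift on $A$ if (1) for every such sequence $\boldsymbol\epsilon$, $S_N^{\boldsymbol\epsilon}[\psi](a,a')\to\psi(a+a')$ as $N\to\infty$ uniformly on compact subsets of $\mathbb A$; and (2) for every family $\{\boldsymbol\epsilon_{\iota'}=(\epsilon_{\iota',N})_{N\ge1}:\iota'\in I'\}$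 of such sequences with $\sup_{\iota'\in I'}\epsilon_{\iota',N}\to0$ as $N\to\infty$, the convergence in (1) is uniform with respect to $\iota'\in I'$ on each compact subset of $\mathbb A$. *)

(* Defs.v *)
From HB Require Import structures.
From mathcomp Require Import all_boot all_order all_algebra.
From mathcomp Require Import all_classical all_reals all_analysis.
From mathcomp Require Import complex.
Set Implicit Arguments. Unset Strict Implicit. Unset Printing Implicit Defensive.
Import Order.TTheory GRing.Theory Num.Theory.
Import numFieldNormedType.Exports.
Local Open Scope ring_scope.
Local Open Scope classical_set_scope.
Local Open Scope complex_scope.

Section Supershift.
Variable R : realType.

Definition open_interval_len_gt2 (A : set R) : Prop :=
  exists (l r : \bar R),
    A = [set x | (l < x%:E)%E /\ (x%:E < r)%E] /\ (l + 2%:E < r)%E.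

Definition bbA (A : set R) : set (R * R) :=
  [set x | A x.2 /\ (forall t : R, -1 <= t <= 1 -> A (x.2 + t)) /\ A (x.1 + x.2)].

Definition hN (eps : nat -> R) (N nu : nat) : R :=
  1 - 2 * ((nu%:R + eps N * (N%:R - nu%:R)) / N%:R).

Definition SN (eps : nat -> R) (psi : R -> R[i]) (N : nat) (a a' : R) : R[i] :=
  \sum_(nu < N.+1)
     (('C(N, nu))%:R * ((1 + a) / 2) ^+ (N - nu) * ((1 - a) / 2) ^+ nu)%:C
       * psi (a' + hN eps N nu).

Definition adm_seq (eps : nat -> R) : Prop :=
  (forall N : nat, (0 < N)%N -> 0 <= eps N < 1) /\ eps @ \oo --> 0.

Definition ccontinuous_on (A : set R) (psi : R -> R[i]) : Prop :=
  forall x, A x -> forall e : R, 0 < e -> exists2 d : R, 0 < d &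
    forall y, A y -> `|y - x| < d -> ComplexField.Normc.normc (psi y - psi x) < e.

Definition regular_C_supershift (A : set R) (psi : R -> R[i]) : Prop :=
  ccontinuous_on A psi /\
  (forall eps : nat -> R, adm_seq eps ->
     forall K : set (R * R), compact K -> K `<=` bbA A ->
     forall e : R, 0 < e -> exists N0 : nat, forall N : nat, (N0 <= N)%N ->
       forall x, K x -> ComplexField.Normc.normc (SN eps psi N x.1 x.2 - psi (x.1 + x.2)) < e) /\
  (forall (I' : Type) (eps : I' -> nat -> R),
     (forall i, adm_seq (eps i)) ->
     (forall d : R, 0 < d -> exists N0 : nat, forall N : nat, (N0 <= N)%N ->
        forall i, eps i N <= d) ->
     forall K : set (R * R), compact K -> K `<=` bbA A ->
     forall e : R, 0 < e -> exists N0 : nat, forall N : nat, (N0 <= N)%N ->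
       forall i, forall x, K x ->
         ComplexField.Normc.normc (SN (eps i) psi N x.1 x.2 - psi (x.1 + x.2)) < e).

End Supershift.

(* Main.v *)
Require Import Defs.
From HB Require Import structures.
From mathcomp Require Import all_boot all_order all_algebra.
From mathcomp Require Import all_classical all_reals all_analysis.
From mathcomp Require Import complex.
From mathcomp Require Import ring lra.
Import Order.TTheory GRing.Theory Num.Theory.
Import numFieldNormedType.Exports.
Local Open Scope ring_scope.
Local Open Scope classical_set_scope.
Local Open Scope complex_scope.

Section Aux.
Variable R : realType.
Implicit Types (eps : nat -> R) (phi f g : R -> R[i]) (A : set R).

Definition epsS eps (M : nat) : R := eps M.+1 + (1 - eps M.+1) / M.+1%:R.

Lemma hN_shift eps M mu : (0 < M)%N -> hN eps M.+1 mu.+1 = hN (epsS eps) M mu.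
Proof.
move=> M0; rewrite /hN /epsS.
have h1 : (M%:R : R) != 0 by rewrite pnatr_eq0 -lt0n.
have h2 : (M.+1%:R : R) != 0 by rewrite pnatr_eq0.
rewrite !mulrSr. 
field.
rewrite -mulrSr h2 h1 //.
Qed.

Definition wN (N nu : nat) (a : R) : R :=
  ('C(N, nu))%:R * ((1 + a) / 2) ^+ (N - nu) * ((1 - a) / 2) ^+ nu.

Lemma SN_wN eps phi N a a' :
  SN eps phi N a a' = \sum_(nu < N.+1) (wN N nu a)%:C * phi (a' + hN eps N nu).
Proof. by []. Qed.

Lemma shift_sum eps phi M a a' : (0 < M)%N ->
  \sum_(nu < M.+2) (wN M.+1 nu a * (nu%:R / M.+1%:R))%:C * phi (a' + hN eps M.+1 nu)
  = ((1 - a) / 2)%:C * SN (epsS eps) phi M a a'.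
Proof.
move=> M0; rewrite big_ord_recl /= mul0r mulr0 rmorph0 mul0r add0r.
rewrite SN_wN mulr_sumr; apply: eq_bigr => i _.
rewrite /bump /= add1n hN_shift // mulrA -rmorphM; congr (_%:C * _).
rewrite /wN subSS exprSr.
have h2 : (M.+1%:R : R) != 0 by rewrite pnatr_eq0.
have := mul_bin_diag M.+1 i => /= /(congr1 (fun n => n%:R : R)).
rewrite !natrM => hb.
have hi : (i.+1%:R : R) != 0 by rewrite pnatr_eq0.
have -> : ('C(M.+1, i.+1)%:R : R) = M.+1%:R * 'C(M, i)%:R / i.+1%:R.
  by rewrite hb mulrAC mulfV ?mul1r.
by field; rewrite !nat1r h2 hi.
Qed.

Lemma SN_mulx eps phi M a a' : (0 < M)%N ->
  SN eps (fun x => x%:C * phi x) M.+1 a a' =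
  (a' + 1 - 2 * eps M.+1)%:C * SN eps phi M.+1 a a'
  - ((1 - eps M.+1) * (1 - a))%:C * SN (epsS eps) phi M a a'.
Proof.
move=> M0.
have -> : ((1 - eps M.+1) * (1 - a))%:C = (2 * (1 - eps M.+1))%:C * ((1 - a) / 2)%:C.
  by rewrite -rmorphM; congr (_%:C); field.
rewrite -mulrA -shift_sum // !SN_wN mulr_sumr mulr_sumr -sumrB; apply: eq_bigr => i _.
have h2 : (M.+1%:R : R) != 0 by rewrite pnatr_eq0.
rewrite mulrA mulrA mulrA -mulrBl; congr (_ * _).
rewrite -!rmorphM -rmorphB; congr (_%:C).
rewrite /hN; field => //.
Qed.

Notation nc := (@ComplexField.Normc.normc R).

Lemma nc_ge0 (z : R[i]) : 0 <= nc z.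
Proof. by case: z => x y; rewrite /ComplexField.Normc.normc sqrtr_ge0. Qed.

Lemma ncD (x y : R[i]) : nc (x + y) <= nc x + nc y.
Proof. exact: (@le_normcD R x y). Qed.

Lemma ncM (x y : R[i]) : nc (x * y) = nc x * nc y.
Proof. exact: ComplexField.Normc.normcM. Qed.

Lemma ncN (x : R[i]) : nc (- x) = nc x.
Proof. exact: (@normcN R x). Qed.

Lemma ncR (r : R) : nc r%:C = `|r|.
Proof. by rewrite /ComplexField.Normc.normc /= expr0n /= addr0 sqrtr_sqr. Qed.

Lemma ncB (x y : R[i]) : nc (x - y) <= nc x + nc y.
Proof. by apply: le_trans (ncD _ _) _; rewrite ncN. Qed.

Lemma nc0 : nc 0 = 0.
Proof. exact: ComplexField.Normc.normc0. Qed.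


Lemma cvg0P (u : nat -> R) : u @ \oo --> 0 ->
  forall d : R, 0 < d -> exists N0 : nat, forall N, (N0 <= N)%N -> `|u N| <= d.
Proof.
move=> /cvgrPdist_le H d d0; have [N0 _ HN] := H d d0.
by exists N0 => N /HN /=; rewrite sub0r normrN.
Qed.

Definition conv2 (A : set R) phi : Prop :=
  forall (I' : Type) (eps : I' -> nat -> R),
     (forall i, adm_seq (eps i)) ->
     (forall d : R, 0 < d -> exists N0 : nat, forall N : nat, (N0 <= N)%N ->
        forall i, eps i N <= d) ->
     forall K : set (R * R), compact K -> K `<=` bbA A ->
     forall e : R, 0 < e -> exists N0 : nat, forall N : nat, (N0 <= N)%N ->
       forall i, forall x, K x ->
         nc (SN (eps i) phi N x.1 x.2 - phi (x.1 + x.2)) < e.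

Lemma reg_of A phi : ccontinuous_on A phi -> conv2 A phi -> regular_C_supershift A phi.
Proof.
move=> hc h2; split => //; split => //.
move=> eps he K cK sK e e0.
have hs : forall d : R, 0 < d -> exists N0 : nat, forall N : nat, (N0 <= N)%N ->
        forall i : unit, eps N <= d.
  move=> d d0; have [N1 HN1] := @cvg0P eps he.2 d d0.
  by exists N1 => N /HN1 h _; apply: le_trans h; exact: ler_norm.
have [N0 HN0] := h2 unit (fun _ => eps) (fun _ => he) hs K cK sK e e0.
by exists N0 => N /HN0 /(_ tt).
Qed.

Lemma SN_add eps f g N a a' :
  SN eps (fun x => f x + g x) N a a' = SN eps f N a a' + SN eps g N a a'.
Proof. by rewrite /SN -big_split; apply: eq_bigr => i _; rewrite mulrDr. Qed.

Lemma SN_scal eps c f N a a' :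
  SN eps (fun x => c * f x) N a a' = c * SN eps f N a a'.
Proof. by rewrite /SN mulr_sumr; apply: eq_bigr => i _; rewrite mulrCA. Qed.

Lemma SN_zero eps N a a' : SN eps (fun _ => 0) N a a' = 0.
Proof. by rewrite /SN big1 // => i _; rewrite mulr0. Qed.

Lemma conv2_add A f g : conv2 A f -> conv2 A g -> conv2 A (fun x => f x + g x).
Proof.
move=> hf hg I' eps ha hs K cK sK e e0.
have e2 : 0 < e / 2 by rewrite divr_gt0.
have [N1 H1] := hf I' eps ha hs K cK sK _ e2.
have [N2 H2] := hg I' eps ha hs K cK sK _ e2.
exists (maxn N1 N2) => N; rewrite geq_max => /andP[n1 n2] i x Kx.
rewrite SN_add.
have -> : SN (eps i) f N x.1 x.2 + SN (eps i) g N x.1 x.2 - (f (x.1 + x.2) + g (x.1 + x.2))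
  = (SN (eps i) f N x.1 x.2 - f (x.1 + x.2)) + (SN (eps i) g N x.1 x.2 - g (x.1 + x.2)).
  by rewrite opprD addrACA.
apply: le_lt_trans (ncD _ _) _.
by rewrite [e](splitr e) ltrD ?H1 ?H2.
Qed.

Lemma conv2_scal A c f : conv2 A f -> conv2 A (fun x => c * f x).
Proof.
move=> hf I' eps ha hs K cK sK e e0.
have c1 : 0 < nc c + 1 by rewrite ltr_wpDl ?nc_ge0.
have e2 : 0 < e / (nc c + 1) by rewrite divr_gt0.
have [N1 H1] := hf I' eps ha hs K cK sK _ e2.
exists N1 => N n1 i x Kx.
rewrite SN_scal -mulrBr ncM.
have h := H1 N n1 i x Kx.
apply: (@le_lt_trans _ _ ((nc c + 1) * nc (SN (eps i) f N x.1 x.2 - f (x.1 + x.2)))).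
  by rewrite ler_wpM2r ?nc_ge0 // lerDl.
by rewrite mulrC -ltr_pdivlMr.
Qed.

Lemma conv2_zero A : conv2 A (fun _ => 0).
Proof.
move=> I' eps ha hs K cK sK e e0; exists 0%N => N _ i x Kx.
by rewrite SN_zero subrr nc0.
Qed.

Lemma cc_add A f g : ccontinuous_on A f -> ccontinuous_on A g ->
  ccontinuous_on A (fun x => f x + g x).
Proof.
move=> hf hg x Ax e e0.
have e2 : 0 < e / 2 by rewrite divr_gt0.
have [d1 d10 H1] := hf x Ax _ e2.
have [d2 d20 H2] := hg x Ax _ e2.
exists (Num.min d1 d2); first by rewrite lt_min d10 d20.
move=> y Ay; rewrite lt_min => /andP[y1 y2].
have -> : f y + g y - (f x + g x) = (f y - f x) + (g y - g x) by rewrite opprD addrACA.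
apply: le_lt_trans (ncD _ _) _.
by rewrite [e](splitr e) ltrD ?H1 ?H2.
Qed.

Lemma cc_scal A c f : ccontinuous_on A f -> ccontinuous_on A (fun x => c * f x).
Proof.
move=> hf x Ax e e0.
have c1 : 0 < nc c + 1 by rewrite ltr_wpDl ?nc_ge0.
have e2 : 0 < e / (nc c + 1) by rewrite divr_gt0.
have [d d0 H] := hf x Ax _ e2.
exists d => // y Ay yx.
rewrite -mulrBr ncM.
have h := H y Ay yx.
apply: (@le_lt_trans _ _ ((nc c + 1) * nc (f y - f x))).
  by rewrite ler_wpM2r ?nc_ge0 // lerDl.
by rewrite mulrC -ltr_pdivlMr.
Qed.

Lemma cc_zero A : ccontinuous_on A (fun _ => 0).
Proof. by move=> x Ax e e0; exists 1 => // y _ _; rewrite subrr nc0. Qed.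

Lemma nc_tri (u v : R[i]) : nc u <= nc v + nc (u - v).
Proof. by have := ncD v (u - v); rewrite addrC subrK. Qed.

Lemma cc_mulx A f : ccontinuous_on A f -> ccontinuous_on A (fun x => x%:C * f x).
Proof.
move=> hf x Ax e e0.
set P := nc (f x) + 1; set X := `|x| + 1.
have P0 : 0 < P by rewrite ltr_wpDl ?nc_ge0.
have X0 : 0 < X by rewrite ltr_wpDl.
have e1 : 0 < Num.min 1 (e / (2 * X)) by rewrite lt_min ltr01 divr_gt0 ?mulr_gt0.
have [d1 d10 H1] := hf x Ax _ e1.
exists (Num.min d1 (e / (2 * P))); first by rewrite lt_min d10 divr_gt0 ?mulr_gt0.
move=> y Ay; rewrite lt_min => /andP[y1 y2].
have h := H1 y Ay y1; move: h; rewrite lt_min => /andP[t1 t2].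
have -> : y%:C * f y - x%:C * f x = (y - x)%:C * f y + x%:C * (f y - f x).
  by rewrite rmorphB /=; ring.
apply: le_lt_trans (ncD _ _) _; rewrite !ncM !ncR.
have n1 : nc (f y) <= P by apply: le_trans (nc_tri (f y) (f x)) _; rewrite lerD2l ltW.
have a1 : `|y - x| * (2 * P) < e by rewrite -ltr_pdivlMr ?mulr_gt0.
have a2 : nc (f y - f x) * (2 * X) < e by rewrite -ltr_pdivlMr ?mulr_gt0.
have g1 := nc_ge0 (f y); have g2 := nc_ge0 (f y - f x).
have g3 : 0 <= `|y - x| by [].
have g4 : `|x| <= X by rewrite lerDl.
have g5 : 0 <= `|x| by [].
nra.
Qed.

Lemma epsS_ge0 eps M : (0 <= eps M.+1 < 1) -> 0 <= epsS eps M.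
Proof.
case/andP=> h0 h1; rewrite /epsS addr_ge0 // divr_ge0 // subr_ge0 ltW //.
Qed.

Lemma epsS_adm_sup (I' : Type) (eps : I' -> nat -> R) :
  (forall i, adm_seq (eps i)) ->
  (forall d : R, 0 < d -> exists N0 : nat, forall N : nat, (N0 <= N)%N ->
        forall i, eps i N <= d) ->
  (forall d : R, 0 < d -> exists N0 : nat, forall N : nat, (N0 <= N)%N ->
        forall i, epsS (eps i) N <= d).
Proof.
move=> ha hs d d0.
have d2 : 0 < d / 2 by rewrite divr_gt0.
have [N0 H0] := hs _ d2.
have b0 : 0 <= 2 / d by rewrite divr_ge0 // ltW.
set N1 := Num.bound (2 / d).
have hN1 := archi_boundP b0.
exists (maxn N0 N1) => N; rewrite geq_max => /andP[n0 n1] i.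
have [he _] := ha i.
have /andP[g0 g1] := he N.+1 isT.
have hi : eps i N.+1 <= d / 2 by apply: H0; apply: leqW.
have hN : 2 / d < N.+1%:R.
  apply: lt_le_trans hN1 _; rewrite ler_nat; exact: leqW.
have Np : (0 : R) < N.+1%:R by rewrite ltr0n.
have : (1 - eps i N.+1) / N.+1%:R <= d / 2.
  have k : 2 < N.+1%:R * d by rewrite -ltr_pdivrMr.
  rewrite ler_pdivrMr //; nra.
rewrite /epsS => h; rewrite [d](splitr d); exact: lerD.
Qed.

Lemma epsS_adm (I' : Type) (eps : I' -> nat -> R) :
  (forall i, adm_seq (eps i)) ->
  (forall d : R, 0 < d -> exists N0 : nat, forall N : nat, (N0 <= N)%N ->
        forall i, eps i N <= d) ->
  forall i, adm_seq (epsS (eps i)).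
Proof.
move=> ha hs i; split.
  move=> N N0; have [he _] := ha i; have /andP[g0 g1] := he N.+1 isT.
  rewrite epsS_ge0 ?g0 ?g1 //= /epsS.
  have Np : (1 : R) < N.+1%:R by rewrite ltr1n ltnS.
  have : (1 - eps i N.+1) / N.+1%:R < 1 - eps i N.+1.
    rewrite ltr_pdivrMr ?ltr0n // ltr_pMr // subr_gt0 //.
  move=> h; by rewrite -ltrBrDl.
apply/cvgrPdist_le => d d0.
have [N0 H0] := @epsS_adm_sup I' eps ha hs d d0.
exists (maxn N0 1) => // N /=; rewrite geq_max => /andP[n0 n1].
have [he _] := ha i; have /andP[g0 g1] := he N.+1 isT.
rewrite sub0r normrN ger0_norm ?epsS_ge0 ?g0 ?g1 //; exact: H0.
Qed.
Lemma bound_on_compact (K : set (R*R)) (g : R*R -> R) :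
  compact K -> (forall x, K x -> exists2 d : R, 0<d & exists M, forall y, K y -> `|y.1 - x.1| < d -> `|y.2 - x.2| < d -> g y <= M) -> exists M, forall x, K x -> g x <= M.
Proof.
move=> cK loc.
have := (compact_near_coveringP K).1 cK.
move/near_covering_withinP => /(_ R (pinfty_nbhs R) (fun M y => g y <= M) _).
case.
- move=> x Kx; have [d d0 [M HM]] := loc x Kx.
  exists (ball x d, [set N | M <= N]).
    split => /=; first exact: nbhsx_ballx.
    exists M; split; [exact: num_real | by move=> z /ltW].
  move=> [y N] /= [bxy MN] Ky.
  move: bxy => [] /=; rewrite /ball /= => h1 h2.
  apply: (le_trans _ MN); apply: HM => //; by rewrite distrC.
- move=> M0 [_ HM0]; exists (M0 + 1) => x Kx; apply: (HM0 (M0+1)) => //.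
  by rewrite ltrDl.
Qed.

Lemma bound_K A f (K : set (R * R)) : ccontinuous_on A f -> compact K -> K `<=` bbA A ->
  exists B : R, forall x, K x -> `|x.1| + `|x.2| + nc (f (x.1 + x.2)) <= B.
Proof.
move=> hc cK sK; apply: bound_on_compact => // x Kx.
have Ax : A (x.1 + x.2) by have := sK x Kx; case=> _ [].
have [d d0 H] := hc _ Ax 1 ltr01.
exists (d / 2); first by rewrite divr_gt0.
exists (`|x.1| + `|x.2| + d + nc (f (x.1 + x.2)) + 1) => y Ky h1 h2.
have Ay : A (y.1 + y.2) by have := sK y Ky; case=> _ [].
have k1 : `|y.1| <= `|x.1| + `|y.1 - x.1|.
  by have := ler_normD x.1 (y.1 - x.1); rewrite addrC subrK.
have k2 : `|y.2| <= `|x.2| + `|y.2 - x.2|.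
  by have := ler_normD x.2 (y.2 - x.2); rewrite addrC subrK.
have k3 : `|y.1 + y.2 - (x.1 + x.2)| < d.
  have -> : y.1 + y.2 - (x.1 + x.2) = (y.1 - x.1) + (y.2 - x.2) by rewrite opprD addrACA.
  apply: le_lt_trans (ler_normD _ _) _.
  by rewrite [d](splitr d) ltrD.
have k4 := H _ Ay k3.
have k5 := nc_tri (f (y.1 + y.2)) (f (x.1 + x.2)).
lra.
Qed.

Lemma conv2_mulx A f : ccontinuous_on A f -> conv2 A f -> conv2 A (fun x => x%:C * f x).
Proof.
move=> hc h2 I' eps ha hs K cK sK e e0.
have [B HB] := @bound_K A f K hc cK sK.
pose C : R := `|B| + 3.
have C0 : 0 < C by rewrite ltr_wpDl.
set e1 := e / (3 * C); set dl := e / (3 * C * C).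
have e1p : 0 < e1 by rewrite divr_gt0 ?mulr_gt0.
have dlp : 0 < dl by rewrite divr_gt0 ?mulr_gt0.
have [N1 H1] := h2 I' eps ha hs K cK sK e1 e1p.
have [N2 H2] := h2 I' (fun i => epsS (eps i)) (@epsS_adm I' eps ha hs)
   (@epsS_adm_sup I' eps ha hs) K cK sK e1 e1p.
have [N3 H3] := hs dl dlp.
exists (maxn (maxn N1 N2.+1) (maxn N3 2)) => N.
rewrite !geq_max => /andP[/andP[n1 n2] /andP[n3 nb]] i x Kx.
case: N n1 n2 n3 nb => [//|M] n1 n2 n3 nb.
have M0 : (0 < M)%N by [].
rewrite SN_mulx //.
set s := SN (eps i) f M.+1 x.1 x.2; set t := SN (epsS (eps i)) f M x.1 x.2.
set u := f (x.1 + x.2); set ep := eps i M.+1.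
have -> : (x.2 + 1 - 2 * ep)%:C * s - ((1 - ep) * (1 - x.1))%:C * t - (x.1 + x.2)%:C * u
   = (x.2 + 1 - 2 * ep)%:C * (s - u) - ((1 - ep) * (1 - x.1))%:C * (t - u)
     - (ep * (1 + x.1))%:C * u.
  rewrite !(rmorphB, rmorphD, rmorphM, rmorph1, rmorph_nat) /=; ring.
apply: le_lt_trans (ncB _ _) _; apply: le_lt_trans (lerD (ncB _ _) (lexx _)) _.
rewrite !ncM !ncR.
have hb := HB x Kx; rewrite -/u in hb.
have s1 : nc (s - u) < e1 by apply: H1.
have t1 : nc (t - u) < e1 by apply: H2.
have ed : ep <= dl by apply: H3.
have /andP[ep0 ep1] := (ha i).1 M.+1 isT; rewrite -/ep in ep0 ep1 ed.
have g1 := nc_ge0 (s - u); have g2 := nc_ge0 (t - u); have g3 := nc_ge0 u.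
have a1 := ler_norm x.1; have a2 := ler_norm (- x.1); rewrite normrN in a2.
have a3 := ler_norm x.2; have a4 := ler_norm (- x.2); rewrite normrN in a4.
have bB := ler_norm B.
have hC : C = `|B| + 3 by [].
have z1 := normr_ge0 x.1; have z2 := normr_ge0 x.2.
have k1 : C * e1 = e / 3 by rewrite /e1; field; rewrite gt_eqF.
have k2 : dl * C * C = e / 3 by rewrite /dl; field; rewrite gt_eqF.
have al : `|x.2 + 1 - 2 * ep| <= C.
rewrite ler_norml hC; apply/andP; split; lra.
have q1 : 0 <= (1 - ep) * (1 + `|B| - x.1) by apply: mulr_ge0; lra.
have q2 : 0 <= (1 - ep) * (1 + `|B| + x.1) by apply: mulr_ge0; lra.
have q4 : 0 <= ep * `|B| by apply: mulr_ge0; lra.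
have q5 : 0 <= ep * (1 - x.1 + `|B|) by apply: mulr_ge0; lra.
have be : `|(1 - ep) * (1 - x.1)| <= C by rewrite ler_norml; apply/andP; split; nra.
have ga : `|ep * (1 + x.1)| <= dl * C.
  rewrite normrM ger0_norm //.
  have : `|1 + x.1| <= C by rewrite ler_norml; apply/andP; split; lra.
  move=> h; apply: ler_pM => //.
have p1 : `|x.2 + 1 - 2 * ep| * nc (s - u) < e / 3.
  rewrite -k1; apply: le_lt_trans (ler_wpM2r g1 al) _; rewrite ltr_pM2l //.
have p2 : `|(1 - ep) * (1 - x.1)| * nc (t - u) < e / 3.
  rewrite -k1; apply: le_lt_trans (ler_wpM2r g2 be) _; rewrite ltr_pM2l //.
have p3 : `|ep * (1 + x.1)| * nc u <= e / 3.
  rewrite -k2; apply: ler_pM => //; lra.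
lra.
Qed.
End Aux.

Theorem mainTheorem7 (R : realType) (A : set R) (psi : R -> R[i]) :
  open_interval_len_gt2 A ->
  regular_C_supershift A psi ->
  regular_C_supershift A (fun a => a%:C * psi a) /\
  (forall p : {poly R[i]}, regular_C_supershift A (fun a => p.[a%:C] * psi a)).
Proof.
move=> _ [hc [_ h2]].
have c2 : @conv2 R A psi := h2.
split; first by apply: reg_of; [exact: cc_mulx | exact: conv2_mulx].
move=> p.
suff [hcp hcq] : ccontinuous_on A (fun a => p.[a%:C] * psi a) /\
                 @conv2 R A (fun a => p.[a%:C] * psi a) by exact: reg_of.
elim/poly_ind: p.
  have -> : (fun a => 0.[a%:C] * psi a) = (fun _ => 0).
    by apply: funext => a; rewrite horner0 mul0r.
  by split; [exact: cc_zero | exact: conv2_zero].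
move=> p c [hcp h2p].
have -> : (fun a => (p * 'X + c%:P).[a%:C] * psi a) =
          (fun a => a%:C * (p.[a%:C] * psi a) + c * psi a).
  by apply: funext => a; rewrite hornerMXaddC; ring.
split.
  by apply: cc_add; [exact: cc_mulx | exact: cc_scal].
by apply: conv2_add; [exact: conv2_mulx | exact: conv2_scal].
Qed.
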